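(* Let $\Phi\colon M_2(\mathbb C)\to M_2(\mathbb C)$ be a BJ isomorphism and let $\phi\colon\mathbb C^2\to\mathbb C^2$ be a bijection which maps orthonormal pairs onto orthonormal pairs and satisfies $\Phi(xy^\ast)\doteq\phi(x)\phi(y)^\ast$ for all $x,y\in\mathbb C^2$. Let $A=xy^\ast+\sigma x'(y')^\ast$, where $\{x,x'\}$ and $\{y,y'\}$ are orthonormal bases of $\mathbb C^2$ and $\sigma\in\mathbb C$ with $|\sigma|<1$. Then there exists $\tau\in\mathbb C$ with $|\tau|<1$ such that $\Phi(A)\doteq\phi(x)\phi(y)^\ast+\tau\,\phi(x')\phi(y')^\ast$.
   Context: $M_2(\mathbb C)$ carries the operator (spectral) norm. $X\perp Y$ (Birkhoff–James orthogonality) means $\|X+\lambda Y\|\ge\|X\|$ for all $\lambda\in\mathbb C$. A BJ isomorphism is a bijection $\Phi$ with $X\perp Y\iff\Phi(X)\perp\Phi(Y)$. $X\doteq Y$ means $\mathbb C X=\mathbb C Y$, i.e. $X$ and $Y$ are equal up to a nonzero scalar factor. *)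

(* Defs.v *)
From HB Require Import structures.
From mathcomp Require Import all_boot all_order all_algebra.
From mathcomp Require Import complex.
From mathcomp Require Import all_classical all_reals.
Set Implicit Arguments. Unset Strict Implicit. Unset Printing Implicit Defensive.
Import Order.TTheory GRing.Theory Num.Theory.
Local Open Scope ring_scope.
Local Open Scope complex_scope.

Section M2.
Variable R : realType.
Local Notation C := R[i].

Definition adjmx m n (A : 'M[C]_(m, n)) : 'M[C]_(n, m) := (map_mx (@conjc R) A)^T.

Definition cdot (u v : 'cV[C]_2) : C := (adjmx v *m u) 0 0.

Definition vnorm (v : 'cV[C]_2) : R :=
  Num.sqrt (\sum_(i < 2) Normc.normc (v i 0) ^+ 2).

Definition opnorm (X : 'M[C]_2) : R :=
  sup [set vnorm (X *m v) | v in [set v : 'cV[C]_2 | vnorm v = 1]]%classic.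

Definition BJorth (X Y : 'M[C]_2) : Prop :=
  forall lam : C, opnorm X <= opnorm (X + lam *: Y).

Definition BJiso (Phi : 'M[C]_2 -> 'M[C]_2) : Prop :=
  bijective Phi /\ forall X Y, BJorth X Y <-> BJorth (Phi X) (Phi Y).

Definition doteq (X Y : 'M[C]_2) : Prop :=
  exists c : C, c != 0 /\ X = c *: Y.

Definition orthonormal_pair (x x' : 'cV[C]_2) : Prop :=
  cdot x x = 1 /\ cdot x' x' = 1 /\ cdot x x' = 0.

Definition xystar (x y : 'cV[C]_2) : 'M[C]_2 := x *m adjmx y.

End M2.

(* Main.v *)
Require Import Defs.
From HB Require Import structures.
From mathcomp Require Import all_boot all_order all_algebra.
From mathcomp Require Import complex.
From mathcomp Require Import all_classical all_reals.
From mathcomp Require Import lra ring.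
Import Order.TTheory GRing.Theory Num.Theory.
Local Open Scope ring_scope.
Local Open Scope complex_scope.
Set Implicit Arguments. Unset Strict Implicit. Unset Printing Implicit Defensive.
Set Warnings "-notation-overridden,-ambiguous-paths".
Section Aux.
Variable R : realType.
Local Notation C := R[i].
Local Notation nc := (@Normc.normc R).

Lemma nc_ge0 (z : C) : 0 <= nc z.
Proof. by case: z => a b; rewrite /= sqrtr_ge0. Qed.

Lemma normC_nc (z : C) : `|z| = (nc z)%:C.
Proof. by []. Qed.

Lemma nc_sqr (z : C) : (nc z ^+ 2)%:C = z * z^*.
Proof. by rewrite rmorphXn /= -normC_nc sqr_normc. Qed.

Lemma nc_conj (z : C) : nc (z^*) = nc z.
Proof. by case: z => a b /=; rewrite sqrrN. Qed.

Lemma ord2P (i : 'I_2) : i = 0 \/ i = 1.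
Proof. case: i => m H. case: m H => [|[|m]] H.
- by left; apply: val_inj.
- by right; apply: val_inj.
- by [].
Qed.

Lemma sum2 (F : 'I_2 -> C) : \sum_(i < 2) F i = F 0 + F 1.
Proof. by rewrite big_ord_recr big_ord1 /=; congr (F _ + F _); apply: val_inj. Qed.

Lemma sum2R (F : 'I_2 -> R) : \sum_(i < 2) F i = F 0 + F 1.
Proof. by rewrite big_ord_recr big_ord1 /=; congr (F _ + F _); apply: val_inj. Qed.

Lemma mulmx2 m n (X : 'M[C]_(m, 2)) (v : 'M[C]_(2, n)) i j :
  (X *m v) i j = X i 0 * v 0 j + X i 1 * v 1 j.
Proof. by rewrite mxE sum2. Qed.

Definition n2 (v : 'cV[C]_2) : R := nc (v 0 0) ^+ 2 + nc (v 1 0) ^+ 2.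

Lemma n2_ge0 v : 0 <= n2 v.
Proof. by rewrite /n2 addr_ge0 // sqr_ge0. Qed.

Lemma vnormE v : vnorm v = Num.sqrt (n2 v).
Proof. by rewrite /vnorm sum2R. Qed.

Lemma cdot_n2 v : cdot v v = (n2 v)%:C.
Proof.
rewrite /cdot /adjmx mulmx2 !mxE /n2 rmorphD /= !nc_sqr.
by rewrite [v 0 0 * _]mulrC [v 1 0 * _]mulrC.
Qed.
End Aux.
Section Op.
Variable R : realType.
Local Notation C := R[i].
Local Notation nc := (@Normc.normc R).
Implicit Types (v : 'cV[C]_2) (X : 'M[C]_2).

Lemma vnorm1 v : (vnorm v = 1) <-> (n2 v = 1).
Proof.
rewrite vnormE; split => [h|->]; last by rewrite sqrtr1.
by rewrite -[n2 v]sqr_sqrtr ?n2_ge0 // h expr1n.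
Qed.

Lemma nc_add (a b : C) : nc (a + b) <= nc a + nc b.
Proof. exact: le_normcD. Qed.

Lemma nc_mul (a b : C) : nc (a * b) = nc a * nc b.
Proof. exact: Normc.normcM. Qed.

Lemma nc_lin (a b c d : C) : nc (a * c + b * d) <= nc a * nc c + nc b * nc d.
Proof. by rewrite -!nc_mul; apply: nc_add. Qed.

Lemma unit_le1 v : n2 v = 1 -> nc (v 0 0) <= 1 /\ nc (v 1 0) <= 1.
Proof.
rewrite /n2 => h; have h0 := nc_ge0 (v 0 0); have h1 := nc_ge0 (v 1 0).
split; nra.
Qed.

Definition Kb (X : 'M[C]_2) := nc (X 0 0) + nc (X 0 1) + (nc (X 1 0) + nc (X 1 1)).

Lemma Kb_bound X v : n2 v = 1 -> vnorm (X *m v) <= Kb X.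
Proof.
move=> hv; have [h0 h1] := unit_le1 hv.
have g0 := nc_ge0 (v 0 0); have g1 := nc_ge0 (v 1 0).
have r0 : nc ((X *m v) 0 0) <= nc (X 0 0) + nc (X 0 1).
  rewrite mulmx2; apply: le_trans (nc_lin _ _ _ _) _.
  have := nc_ge0 (X 0 0); have := nc_ge0 (X 0 1); nra.
have r1 : nc ((X *m v) 1 0) <= nc (X 1 0) + nc (X 1 1).
  rewrite mulmx2; apply: le_trans (nc_lin _ _ _ _) _.
  have := nc_ge0 (X 1 0); have := nc_ge0 (X 1 1); nra.
have q0 := nc_ge0 ((X *m v) 0 0); have q1 := nc_ge0 ((X *m v) 1 0).
rewrite vnormE /Kb -[X in _ <= X]ger0_norm ?addr_ge0 ?nc_ge0 // -sqrtr_sqr.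
apply: ler_wsqrtr; rewrite /n2; nra.
Qed.

Definition OS (X : 'M[C]_2) :=
  [set vnorm (X *m v) | v in [set v : 'cV[C]_2 | vnorm v = 1]]%classic.

Definition e0 : 'cV[C]_2 := delta_mx 0 0.
Definition e1 : 'cV[C]_2 := delta_mx 1 0.

Lemma n2e0 : n2 e0 = 1.
Proof. by rewrite /n2 /e0 !mxE /= expr0n expr1n !addr0 sqrtr0 sqrtr1 expr0n expr1n addr0. Qed.
Lemma n2e1 : n2 e1 = 1.
Proof. by rewrite /n2 /e1 !mxE /= expr0n expr1n !addr0 sqrtr0 sqrtr1 expr0n expr1n add0r. Qed.

Lemma OS_sup X : has_sup (OS X).
Proof.
split; first by exists (vnorm (X *m e0)), e0 => //; apply/vnorm1; exact: n2e0.
exists (Kb X) => _ [v /= /vnorm1 hv <-]; exact: Kb_bound.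
Qed.

Lemma opnorm_ge X v : n2 v = 1 -> vnorm (X *m v) <= opnorm X.
Proof.
move=> hv; apply: (sup_upper_bound (OS_sup X)); exists v => //=; exact/vnorm1.
Qed.

Lemma opnorm_le X K : (forall v, n2 v = 1 -> vnorm (X *m v) <= K) -> opnorm X <= K.
Proof.
move=> h; apply: ge_sup; first by case: (OS_sup X).
by move=> _ [v /= /vnorm1 hv <-]; apply: h.
Qed.

Lemma opnorm_ge0 X : 0 <= opnorm X.
Proof.
apply: le_trans (opnorm_ge X n2e0); rewrite vnormE sqrtr_ge0 //.
Qed.

Lemma opnorm_le2 X K : 0 <= K -> (forall v, n2 v = 1 -> n2 (X *m v) <= K ^+ 2) -> opnorm X <= K.
Proof.
move=> K0 h; apply: opnorm_le => v hv; rewrite vnormE -(ger0_norm K0) -sqrtr_sqr.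
exact/ler_wsqrtr/h.
Qed.

Lemma opnorm_ge2 X v K : 0 <= K -> n2 v = 1 -> K ^+ 2 <= n2 (X *m v) -> K <= opnorm X.
Proof.
move=> K0 hv h; apply: le_trans (opnorm_ge X hv); rewrite vnormE.
rewrite -(ger0_norm K0) -sqrtr_sqr; exact: ler_wsqrtr.
Qed.
End Op.
Section Unit.
Variable R : realType.
Local Notation C := R[i].
Local Notation nc := (@Normc.normc R).
Implicit Types (v : 'cV[C]_2) (X : 'M[C]_2).

Lemma adjmxM m n p (A : 'M[C]_(m, n)) (B : 'M[C]_(n, p)) :
  adjmx (A *m B) = adjmx B *m adjmx A.
Proof. by rewrite /adjmx map_mxM trmx_mul. Qed.

Lemma adjmxK m n (A : 'M[C]_(m, n)) : adjmx (adjmx A) = A.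
Proof. by apply/matrixP => i j; rewrite !mxE conjcK. Qed.

Definition unitary (U : 'M[C]_2) := adjmx U *m U = 1%:M.

Lemma unitary_adj U : unitary U -> unitary (adjmx U).
Proof. by rewrite /unitary adjmxK => /mulmx1C. Qed.

Lemma unitaryE U : unitary U -> U *m adjmx U = 1%:M.
Proof. by move/mulmx1C. Qed.

Lemma n2_unitary U v : unitary U -> n2 (U *m v) = n2 v.
Proof.
move=> hU; apply: (@complexI R); rewrite -!cdot_n2 /cdot adjmxM.
by rewrite -mulmxA (mulmxA (adjmx U)) hU mul1mx.
Qed.

Lemma vnorm_unitary U v : unitary U -> vnorm (U *m v) = vnorm v.
Proof. by move=> hU; rewrite !vnormE n2_unitary. Qed.

Lemma opnorm_unitary P Q X : unitary P -> unitary Q ->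
  opnorm (P *m X *m adjmx Q) = opnorm X.
Proof.
move=> hP hQ; apply/eqP; rewrite eq_le; apply/andP; split.
  apply: opnorm_le => v hv; rewrite -!mulmxA vnorm_unitary //.
  by apply: opnorm_ge; rewrite n2_unitary //; apply: unitary_adj.
apply: opnorm_le => v hv.
have -> : X *m v = X *m adjmx Q *m (Q *m v).
  by rewrite -mulmxA (mulmxA (adjmx Q)) hQ mul1mx.
rewrite -(vnorm_unitary _ hP) [P *m _]mulmxA [P *m _]mulmxA.
by apply: opnorm_ge; rewrite n2_unitary.
Qed.

Lemma BJ_unitary P Q X Y : unitary P -> unitary Q ->
  BJorth (P *m X *m adjmx Q) (P *m Y *m adjmx Q) <-> BJorth X Y.
Proof.
move=> hP hQ; have E : forall lam : C, P *m X *m adjmx Q + lam *: (P *m Y *m adjmx Q)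
   = P *m (X + lam *: Y) *m adjmx Q.
  by move=> lam; rewrite mulmxDr mulmxDl -scalemxAr -scalemxAl.
split => h lam; have := h lam; by rewrite ?E !opnorm_unitary.
Qed.

Lemma opnormZ (c : C) X : opnorm (c *: X) = nc c * opnorm X.
Proof.
have n2Z : forall (d : C) v, n2 (d *: v) = nc d ^+ 2 * n2 v.
  by move=> d v; rewrite /n2 !mxE !nc_mul !exprMn mulrDr.
have le1 : forall (d : C) Y, opnorm (d *: Y) <= nc d * opnorm Y.
  move=> d Y; apply: opnorm_le => v hv; rewrite -scalemxAl vnormE n2Z sqrtrM ?sqr_ge0 //.
  rewrite sqrtr_sqr ger0_norm ?nc_ge0 // ler_wpM2l ?nc_ge0 // -vnormE.
  exact: opnorm_ge.
have [->|c0] := eqVneq c 0.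
  rewrite Normc.normc0 mul0r; apply/eqP; rewrite eq_le opnorm_ge0 andbT.
  by have := le1 0 X; rewrite Normc.normc0 mul0r.
apply/eqP; rewrite eq_le le1 /=.
have nc0 : 0 < nc c.
  rewrite lt_def nc_ge0 andbT; apply/eqP => /(@Normc.eq0_normc R) h; by rewrite h eqxx in c0.
have := le1 c^-1 (c *: X); rewrite scalerA mulVf // scale1r Normc.normcV.
by rewrite ler_pdivlMl.
Qed.

Lemma BJ_scale (c : C) X Y : c != 0 -> BJorth (c *: X) Y <-> BJorth X Y.
Proof.
move=> c0; have nc0 : 0 < nc c.
  rewrite lt_def nc_ge0 andbT; apply/eqP => /(@Normc.eq0_normc R) h; by rewrite h eqxx in c0.
split => h lam.
  by have := h (c * lam); rewrite -scalerA -scalerDr !opnormZ ler_pM2l.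
have -> : c *: X + lam *: Y = c *: (X + (c^-1 * lam) *: Y).
  by rewrite scalerDr scalerA mulrA mulfV // mul1r.
rewrite !opnormZ ler_pM2l //; exact: h.
Qed.

Lemma BJ_scale_r (c : C) X Y : c != 0 -> BJorth X (c *: Y) <-> BJorth X Y.
Proof.
move=> c0; split => h lam.
  by have := h (lam / c); rewrite scalerA mulfVK.
by have := h (lam * c); rewrite scalerA.
Qed.
End Unit.
Section Real.
Variable R : realType.
Lemma key_real (a b s A B G : R) : 0 <= a -> 0 <= b -> a^+2 + b^+2 = 1 ->
  0 <= s -> s < 1 -> 0 <= A -> 0 <= B -> 0 <= G ->
  forall L t, L = (1 + A + B + G) ^+ 2 -> t = (1 - s ^+ 2) / (16 * L) ->
  ((1 - t) * a + t * A * b) ^+ 2 + (t * B * a + (s + t * G) * b) ^+ 2 <= 1 - t / 2.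
Proof.
move=> a0 b0 ab s0 s1 A0 B0 G0 L t EL Et.
have L1 : 1 <= L by rewrite EL; nra.
have tL : t * (16 * L) = 1 - s ^+ 2 by rewrite Et mulfVK //; apply/eqP; nra.
have t0 : 0 < t by rewrite Et divr_gt0 //; nra.
have tL1 : t * L <= 1/16 by nra.
have t1 : t <= 1/16 by nra.
have AL : A <= L by rewrite EL; nra.
have BL : B ^+ 2 + 1 <= L by rewrite EL; nra.
have GL : G ^+ 2 <= L by rewrite EL; nra.
have AL2 : A ^+ 2 <= L by rewrite EL; nra.
have GL1 : G <= L by rewrite EL; nra.
have h1 : 2 * t * A * a * b <= t / 2 * a ^+ 2 + 2 * t * A ^+ 2 * b ^+ 2.
  have : 0 <= t / 2 * (a - 2 * A * b) ^+ 2 by apply: mulr_ge0; [lra| apply: sqr_ge0].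
  nra.
set u := s + t * G.
have u0 : 0 <= u by rewrite /u; nra.
have u2 : u ^+ 2 <= s ^+ 2 + 3 * t * L.
  have sG : s * G <= L by nra.
  have f1 : s * t * G <= t * L.
    have : 0 <= t * (L - s * G) by apply: mulr_ge0; lra.
    nra.
  have f2 : t * G ^+ 2 <= L.
    have : 0 <= (1 - t) * G ^+ 2 by apply: mulr_ge0; [lra| apply: sqr_ge0].
    nra.
  have f3 : t ^+ 2 * G ^+ 2 <= t * L.
    have : 0 <= t * (L - t * G ^+ 2) by apply: mulr_ge0; lra.
    nra.
  rewrite /u; nra.
have u3 : u ^+ 2 <= 2 by nra.
have h2 : 2 * t * B * u * a * b <= t / 2 * a ^+ 2 + 2 * t * B ^+ 2 * u ^+ 2 * b ^+ 2.
  have : 0 <= t / 2 * (a - 2 * B * u * b) ^+ 2 by apply: mulr_ge0; [lra| apply: sqr_ge0].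
  nra.
have c1 : (1 - t) ^+ 2 + t + t ^+ 2 * B ^+ 2 <= 1 - t / 2 by nra.
have c2 : t ^+ 2 * A ^+ 2 + 2 * t * A ^+ 2 + 2 * t * B ^+ 2 * u ^+ 2 + u ^+ 2 <= 1 - t / 2.
  have e1 : t ^+ 2 * A ^+ 2 <= t * L by nra.
  have e2 : 2 * t * B ^+ 2 * u ^+ 2 <= 4 * t * L by nra.
  nra.
have ab1 : 0 <= a * b by nra.
have E : ((1 - t) * a + t * A * b) ^+ 2 + (t * B * a + u * b) ^+ 2 <=
   ((1 - t) ^+ 2 + t + t ^+ 2 * B ^+ 2) * a ^+ 2 +
   (t ^+ 2 * A ^+ 2 + 2 * t * A ^+ 2 + 2 * t * B ^+ 2 * u ^+ 2 + u ^+ 2) * b ^+ 2.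
  have : 0 <= t ^+ 2 * A * (a * b) by rewrite !mulr_ge0 // ?sqr_ge0 //; lra.
  nra.
apply: le_trans E _.
have : 0 <= a ^+ 2 by apply: sqr_ge0.
have : 0 <= b ^+ 2 by apply: sqr_ge0.
nra.
Qed.
End Real.
Section Coord.
Variable R : realType.
Local Notation C := R[i].
Local Notation nc := (@Normc.normc R).
Implicit Types (v : 'cV[C]_2) (X : 'M[C]_2).

Definition Dg (s : C) : 'M[C]_2 :=
  \matrix_(i, j) (if i == j then (if i == 0 then 1 else s) else 0).

Lemma Dg00 s : Dg s 0 0 = 1. Proof. by rewrite mxE. Qed.
Lemma Dg01 s : Dg s 0 1 = 0. Proof. by rewrite mxE. Qed.
Lemma Dg10 s : Dg s 1 0 = 0. Proof. by rewrite mxE. Qed.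
Lemma Dg11 s : Dg s 1 1 = s. Proof. by rewrite mxE. Qed.

Lemma Xe0 X i : (X *m e0 R) i 0 = X i 0.
Proof. by rewrite mulmx2 !mxE /= mulr1 mulr0 addr0. Qed.
Lemma Xe1 X i : (X *m e1 R) i 0 = X i 1.
Proof. by rewrite mulmx2 !mxE /= mulr1 mulr0 add0r. Qed.

Lemma nc_real (x : R) : nc (x%:C) = `|x|.
Proof. by rewrite /= expr0n /= addr0 sqrtr_sqr. Qed.

Lemma entryDZ (X Y : 'M[C]_2) (l : C) i j : (X + l *: Y) i j = X i j + l * Y i j.
Proof. by rewrite !mxE. Qed.

Lemma sq_le (x y : R) : 0 <= x -> x <= y -> x ^+ 2 <= y ^+ 2.
Proof. move=> x0 xy; rewrite !expr2; apply: ler_pM => //. Qed.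

Lemma easy_ineq (a b s : R) : 0 <= s -> s <= 1 -> a ^+ 2 + b ^+ 2 = 1 ->
  a ^+ 2 + (s * b) ^+ 2 <= 1.
Proof.
move=> s0 s1 ab; have s2 : s ^+ 2 <= 1 by nra.
have : 0 <= (1 - s ^+ 2) * b ^+ 2 by rewrite mulr_ge0 ?sqr_ge0 //; lra.
rewrite exprMn; nra.
Qed.

Lemma tfacts (s L t : R) : 0 <= s -> s < 1 -> 1 <= L -> t = (1 - s ^+ 2) / (16 * L) ->
  [/\ 0 < t, t <= 1/16, 0 <= 1 - t, 0 <= 1 - t / 2 & 1 - t / 2 < 1].
Proof.
move=> s0 s1 L1 ->; have s2 : s ^+ 2 < 1 by nra.
have L16 : 0 < 16 * L by lra.
have t0 : 0 < (1 - s ^+ 2) / (16 * L) by rewrite divr_gt0 //; lra.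
have t1 : (1 - s ^+ 2) / (16 * L) <= 1/16 by rewrite ler_pdivrMr //; nra.
split => //; lra.
Qed.

Lemma orth_easy s (Cm : 'M[C]_2) : nc s <= 1 -> Cm 0 0 = 0 -> BJorth (Dg s) Cm.
Proof.
move=> hs hC lam.
have le1 : opnorm (Dg s) <= 1.
  apply: opnorm_le2 => // v hv; rewrite /n2 !mulmx2 Dg00 Dg01 Dg10 Dg11.
  rewrite mul1r mul0r addr0 mul0r add0r nc_mul expr1n.
  exact: easy_ineq (nc_ge0 s) hs hv.
apply: le_trans le1 _; apply: (@opnorm_ge2 _ _ (e0 R)) => //; first exact: n2e0.
rewrite /n2 !Xe0 mxE Dg00 [(lam *: Cm) 0 0]mxE hC mulr0 addr0 Normc.normc1 expr1n.
have := sqr_ge0 (nc ((Dg s + lam *: Cm) 1 0)); lra.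
Qed.

Lemma opnorm_Dg_le s : nc s <= 1 -> opnorm (Dg s) <= 1.
Proof.
move=> hs; apply: opnorm_le2 => // v hv; rewrite /n2 !mulmx2 Dg00 Dg01 Dg10 Dg11.
rewrite mul1r mul0r addr0 mul0r add0r nc_mul expr1n.
exact: easy_ineq (nc_ge0 s) hs hv.
Qed.

Lemma ge1_Dg s : 1 <= opnorm (Dg s).
Proof.
apply: (@opnorm_ge2 _ _ (e0 R)) => //; first exact: n2e0.
rewrite /n2 !Xe0 Dg00 Dg10 Normc.normc1 Normc.normc0 expr1n; lra.
Qed.

Lemma orth_hard s (Cm : 'M[C]_2) : nc s < 1 -> Cm 0 0 != 0 -> ~ BJorth (Dg s) Cm.
Proof.
move=> hs hC h.
have nc0 : 0 < nc (Cm 0 0).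
  rewrite lt_def nc_ge0 andbT; apply/eqP => /(@Normc.eq0_normc R) e; by rewrite e eqxx in hC.
set c := Cm 0 0.
set A := nc (Cm 0 1) / nc c; set B := nc (Cm 1 0) / nc c; set G := nc (Cm 1 1) / nc c.
have A0 : 0 <= A by rewrite divr_ge0 ?nc_ge0 // ltW.
have B0 : 0 <= B by rewrite divr_ge0 ?nc_ge0 // ltW.
have G0 : 0 <= G by rewrite divr_ge0 ?nc_ge0 // ltW.
set L := (1 + A + B + G) ^+ 2; set t := (1 - nc s ^+ 2) / (16 * L).
have s0 := nc_ge0 s.
have L1 : 1 <= L.
  have K1 : 1 <= 1 + A + B + G by rewrite -!addrA lerDl !addr_ge0.
  by have := sq_le ler01 K1; rewrite expr1n.
have [t0 t1 t2 K0 K1] := @tfacts (nc s) L t s0 hs L1 erefl.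
set lam := - (t%:C) / c.
have nlam : forall z : C, nc (lam * z) = t * (nc z / nc c).
  have ncN : forall z : C, nc (- z) = nc z by case=> x y /=; rewrite !sqrrN.
  move=> z; rewrite nc_mul /lam nc_mul ncN nc_real Normc.normcV ger0_norm ?ltW //.
  by rewrite mulrAC -mulrA.
have e00 : 1 + lam * c = (1 - t)%:C.
  by rewrite /lam mulrAC -mulrA mulfV // mulr1 rmorphB.
have lt1 : opnorm (Dg s + lam *: Cm) < 1.
  apply: (@le_lt_trans _ _ (Num.sqrt (1 - t / 2))); last first.
    by rewrite -[X in _ < X]sqrtr1 ltr_sqrt // ltr01.
  apply: opnorm_le2; first exact: sqrtr_ge0.
  move=> v hv; rewrite sqr_sqrtr // /n2 !mulmx2 !entryDZ Dg00 Dg01 Dg10 Dg11 !add0r -/c e00.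
  set a := nc (v 0 0); set b := nc (v 1 0).
  have a0 : 0 <= a by exact: nc_ge0.
  have b0 : 0 <= b by exact: nc_ge0.
  have r0 : nc ((1 - t)%:C * v 0 0 + lam * Cm 0 1 * v 1 0) <= (1 - t) * a + t * A * b.
    apply: le_trans (nc_lin _ _ _ _) _; by rewrite nc_real nlam ger0_norm.
  have r1 : nc (lam * Cm 1 0 * v 0 0 + (s + lam * Cm 1 1) * v 1 0)
      <= t * B * a + (nc s + t * G) * b.
    apply: le_trans (nc_lin _ _ _ _) _; rewrite nlam -/B.
    have := nc_add s (lam * Cm 1 1); rewrite nlam -/G => hh.
    by rewrite lerD2l; apply: ler_wpM2r.
  have KR := @key_real R a b (nc s) A B G a0 b0 hv s0 hs A0 B0 G0 L t erefl erefl.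
  have q0 := nc_ge0 ((1 - t)%:C * v 0 0 + lam * Cm 0 1 * v 1 0).
  have q1 := nc_ge0 (lam * Cm 1 0 * v 0 0 + (s + lam * Cm 1 1) * v 1 0).
  apply: le_trans KR.
  by apply: lerD; apply: sq_le.
have := le_lt_trans (le_trans (ge1_Dg s) (h lam)) lt1; by rewrite ltxx.
Qed.
End Coord.
Section L2.
Variable R : realType.
Local Notation C := R[i].
Local Notation nc := (@Normc.normc R).
Implicit Types (v : 'cV[C]_2) (X : 'M[C]_2).

Lemma sq_le_inv (x y : R) : 0 <= x -> 0 <= y -> x ^+ 2 <= y ^+ 2 -> x <= y.
Proof. move=> x0 y0 h; nra. Qed.

Lemma n2_le_op X v : n2 v = 1 -> n2 (X *m v) <= opnorm X ^+ 2.
Proof.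
move=> hv; have := opnorm_ge X hv; rewrite vnormE => h.
rewrite -(sqr_sqrtr (n2_ge0 (X *m v))); exact: sq_le (sqrtr_ge0 _) h.
Qed.

Lemma nc_eq0 (z : C) : nc z ^+ 2 <= 0 -> z = 0.
Proof.
move=> h; apply: (@Normc.eq0_normc R); have := nc_ge0 z; have := sqr_ge0 (nc z).
move=> h1 h2; apply/eqP; rewrite -sqrf_eq0 eq_le h h1 //.
Qed.

Lemma nc_gt0 (z : C) : z != 0 -> 0 < nc z.
Proof.
move=> hz; rewrite lt_def nc_ge0 andbT; apply/eqP => /(@Normc.eq0_normc R) e.
by rewrite e eqxx in hz.
Qed.

Lemma row_bound X : nc (X 0 0) ^+ 2 + nc (X 0 1) ^+ 2 <= opnorm X ^+ 2.
Proof.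
set r2 := nc (X 0 0) ^+ 2 + nc (X 0 1) ^+ 2.
have r20 : 0 <= r2 by rewrite addr_ge0 ?sqr_ge0.
have [r2z|r2p] := eqVneq r2 0; first by rewrite r2z sqr_ge0.
have r2g : 0 < r2 by rewrite lt_def r2p.
set r := Num.sqrt r2.
have rp : 0 < r by rewrite sqrtr_gt0.
have rr : r ^+ 2 = r2 by rewrite sqr_sqrtr.
set w : 'cV[C]_2 := \matrix_(i, j) ((r^-1)%:C * (X 0 i)^*).
have ncw : forall i, nc (w i 0) = r^-1 * nc (X 0 i).
  by move=> i; rewrite mxE nc_mul nc_real nc_conj ger0_norm // invr_ge0 ltW.
have hw : n2 w = 1.
  rewrite /n2 !ncw !exprMn -mulrDr -/r2 -rr exprVn mulVf //.
  by rewrite expf_neq0 // gt_eqF.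
have := n2_le_op X hw; apply: le_trans.
rewrite /n2 mulmx2 !mxE !mulrA ![X 0 _ * _]mulrC -!mulrA -mulrDr -!nc_sqr -rmorphD -/r2.
rewrite -rmorphM nc_real ger0_norm; last by rewrite mulr_ge0 // invr_ge0 ltW.
rewrite -rr mulrA mulVf ?gt_eqF // mul1r rr.
by rewrite lerDl sqr_ge0.
Qed.

Lemma L2 (N : 'M[C]_2) : (forall Cm : 'M[C]_2, BJorth N Cm <-> Cm 0 0 = 0) ->
  [/\ N 0 1 = 0, N 1 0 = 0, N 0 0 != 0 & nc (N 1 1) < nc (N 0 0)].
Proof.
move=> hN; set a := N 0 0.
have a0 := nc_ge0 a.
have ub : opnorm N <= nc a.
  have h0 : BJorth N (N - a *: Dg 0).
    apply/hN.
    have -> : (N - a *: Dg 0) 0 0 = N 0 0 - a * Dg 0 0 0 by rewrite !mxE.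
    by rewrite Dg00 mulr1 subrr.
  have := h0 (-1); rewrite scaleN1r opprB addrC subrK opnormZ => h1.
  apply: le_trans h1 _; rewrite -[X in _ <= X]mulr1 ler_wpM2l //.
  by apply: opnorm_Dg_le; rewrite Normc.normc0.
have ub2 : opnorm N ^+ 2 <= nc a ^+ 2 by apply: sq_le => //; exact: opnorm_ge0.
have N10 : N 1 0 = 0.
  apply: nc_eq0; have := n2_le_op N (n2e0 R); rewrite /n2 !Xe0 -/a => h.
  have := sqr_ge0 (nc a); lra.
have N01 : N 0 1 = 0.
  apply: nc_eq0; have := row_bound N; rewrite -/a => h; lra.
have anz : a != 0.
  apply/negP => /eqP az.
  have : BJorth N (Dg 0).
    move=> lam; apply: le_trans (opnorm_ge0 _); by rewrite -(Normc.normc0 R) -az.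
  by move/hN; rewrite Dg00 => /eqP; rewrite oner_eq0.
have dle : nc (N 1 1) <= nc a.
  apply: sq_le_inv => //; first exact: nc_ge0.
  have := n2_le_op N (n2e1 R); rewrite /n2 !Xe1 N01 Normc.normc0 expr0n add0r => h.
  by apply: le_trans h ub2.
split => //; rewrite lt_def dle andbT; apply/negP => /eqP da.
set d := N 1 1 in da.
have : BJorth N (Dg (- (d / a))).
  move=> lam; apply: le_trans ub _.
  have ap : 0 < nc a by apply: nc_gt0.
  have tri : nc a *+ 2 <= nc (a + lam) + nc (a - lam).
    rewrite -normcMn; apply: le_trans (nc_add _ _); by rewrite addrACA subrr addr0 mulr2n.
  have g0 : nc (a + lam) ^+ 2 <= n2 ((N + lam *: Dg (- (d / a))) *m e0 R).
    by rewrite /n2 !Xe0 entryDZ Dg00 mulr1 -/a lerDl sqr_ge0.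
  have g1 : nc (a - lam) ^+ 2 <= n2 ((N + lam *: Dg (- (d / a))) *m e1 R).
    rewrite /n2 !Xe1 !entryDZ Dg01 Dg11 N01 mulr0 addr0 Normc.normc0 expr0n add0r -/d.
    have -> : d + lam * - (d / a) = d / a * (a - lam).
      by rewrite mulrBr divfK // mulrN [lam * _]mulrC.
    rewrite !nc_mul Normc.normcV da divff; first by rewrite mul1r.
    by rewrite -da; apply: lt0r_neq0.
  have [h1|h1] := lerP (nc a) (nc (a + lam)).
    apply: le_trans h1 _; apply: (opnorm_ge2 (nc_ge0 _) (n2e0 R) g0).
  have h2 : nc a <= nc (a - lam) by rewrite mulr2n in tri; lra.
  apply: le_trans h2 _; apply: (opnorm_ge2 (nc_ge0 _) (n2e1 R) g1).
by move/hN; rewrite Dg00 => /eqP; rewrite oner_eq0.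
Qed.
End L2.
Section Main.
Variable R : realType.
Local Notation C := R[i].
Local Notation nc := (@Normc.normc R).
Implicit Types (v : 'cV[C]_2) (X : 'M[C]_2).

Definition mkU (p p' : 'cV[C]_2) : 'M[C]_2 :=
  \matrix_(i, j) (if j == 0 then p i 0 else p' i 0).

Lemma cdotE (p q : 'cV[C]_2) : cdot p q = (q 0 0)^* * p 0 0 + (q 1 0)^* * p 1 0.
Proof. by rewrite /cdot mulmx2 !mxE. Qed.

Lemma mkU_unitary p p' : orthonormal_pair p p' -> unitary (mkU p p').
Proof.
case=> h1 [h2 h3]; move: h1 h2 h3; rewrite !cdotE => h1 h2 h3.
apply/matrixP => i j; rewrite mulmx2 !mxE.
have h4 : (p' 0 0)^* * p 0 0 + (p' 1 0)^* * p 1 0 = 0 by [].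
have h5 : (p 0 0)^* * p' 0 0 + (p 1 0)^* * p' 1 0 = 0.
  have := congr1 (@conjc R) h4; rewrite rmorphD !rmorphM /= !conjcK => H.
  by rewrite [X in X + _]mulrC [X in _ + X]mulrC H oppr0.
case: (ord2P i) => ->; case: (ord2P j) => -> /=.
- by rewrite h1.
- by rewrite h5.
- by rewrite h4 .
- by rewrite h2.
Qed.

Lemma xy_mkU p p' q q' (s : C) :
  xystar p q + s *: xystar p' q' = mkU p p' *m Dg s *m adjmx (mkU q q').
Proof.
apply/matrixP => i j; rewrite mulmx2 !mulmx2 !mxE !big_ord1 !mxE /=.
rewrite mulr1 mulr0 addr0 mulr0 add0r [p' i 0 * s]mulrC -mulrA.
by [].
Qed.

Lemma xy_mkU0 p p' q q' :
  xystar p q = mkU p p' *m Dg 0 *m adjmx (mkU q q').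
Proof. by rewrite -(xy_mkU p p' q q' 0) scale0r addr0. Qed.

Lemma DgP (s : C) Z : nc s < 1 -> BJorth (Dg s) Z <-> Z 0 0 = 0.
Proof.
move=> hs; split; last by apply: orth_easy; apply: ltW.
move=> h; apply/eqP; apply/negP => /negP hz; exact: orth_hard hs hz h.
Qed.

Lemma unitary_split P X : unitary P -> X = P *m (adjmx P *m X).
Proof. by move=> hP; rewrite mulmxA unitaryE // mul1mx. Qed.

Lemma unitary_split2 P Q X : unitary P -> unitary Q ->
  X = P *m (adjmx P *m X *m Q) *m adjmx Q.
Proof.
move=> hP hQ; rewrite -!mulmxA (unitaryE hQ) mulmx1 mulmxA (unitaryE hP) mul1mx //.
Qed.
End Main.

Unset Implicit Arguments.

Theorem lemma5p8 (R : realType)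
  (Phi : 'M[R[i]]_2 -> 'M[R[i]]_2) (phi : 'cV[R[i]]_2 -> 'cV[R[i]]_2) :
  BJiso Phi ->
  bijective phi ->
  (forall u u' : 'cV[R[i]]_2, orthonormal_pair u u' <-> orthonormal_pair (phi u) (phi u')) ->
  (forall u v : 'cV[R[i]]_2, doteq (Phi (xystar u v)) (xystar (phi u) (phi v))) ->
  forall (x x' y y' : 'cV[R[i]]_2) (sigma : R[i]),
    orthonormal_pair x x' -> orthonormal_pair y y' -> Normc.normc sigma < 1 ->
    exists tau : R[i], Normc.normc tau < 1 /\
      doteq (Phi (xystar x y + sigma *: xystar x' y'))
            (xystar (phi x) (phi y) + tau *: xystar (phi x') (phi y')).
Proof.
move=> [[Psi PhiK PsiK] hPhi] _ hphi hrank x x' y y' sigma hx hy hs.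
have hu := (hphi x x').1 hx; have hv := (hphi y y').1 hy.
set u := phi x in hu *; set u' := phi x' in hu *.
set v := phi y in hv *; set v' := phi y' in hv *.
set P := mkU x x'; set Q := mkU y y'; set P' := mkU u u'; set Q' := mkU v v'.
have uP : unitary P by apply: mkU_unitary.
have uQ : unitary Q by apply: mkU_unitary.
have uP' : unitary P' by apply: mkU_unitary.
have uQ' : unitary Q' by apply: mkU_unitary.
set M := Phi (xystar x y + sigma *: xystar x' y').
set N := adjmx P' *m M *m Q'.
have MN : M = P' *m N *m adjmx Q' by apply: unitary_split2.
have [c [c0 hc]] := hrank x y.
have key : forall Cm : 'M[R[i]]_2, BJorth N Cm <-> Cm 0 0 = 0.
  move=> Cm.
  set B := P' *m Cm *m adjmx Q'.
  set Z := adjmx P *m Psi B *m Q.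
  have PZ : Psi B = P *m Z *m adjmx Q by apply: unitary_split2.
  have e1 : BJorth N Cm <-> BJorth M B.
    by rewrite MN; apply: iff_sym; apply: BJ_unitary.
  have e2 : BJorth M B <-> BJorth (xystar x y + sigma *: xystar x' y') (Psi B).
    by rewrite /M -{1}(PsiK B); apply: iff_sym; apply: hPhi.
  have e3 : BJorth (xystar x y + sigma *: xystar x' y') (Psi B) <-> Z 0 0 = 0.
    rewrite xy_mkU -/P -/Q PZ; apply: iff_trans (DgP Z hs).
    by apply: BJ_unitary.
  have n0 : Normc.normc (0 : R[i]) < 1 by rewrite Normc.normc0 ltr01.
  have e4 : Z 0 0 = 0 <-> BJorth (xystar x y) (Psi B).
    rewrite (xy_mkU0 x x' y y') -/P -/Q PZ; apply: iff_sym; apply: iff_trans (DgP Z n0).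
    by apply: BJ_unitary.
  have e5 : BJorth (xystar x y) (Psi B) <-> BJorth (xystar u v) B.
    apply: iff_trans (hPhi _ _) _; rewrite PsiK hc; exact: BJ_scale.
  have e6 : BJorth (xystar u v) B <-> Cm 0 0 = 0.
    rewrite (xy_mkU0 u u' v v') -/P' -/Q'; apply: iff_trans (DgP Cm n0).
    by apply: BJ_unitary.
  by apply: iff_trans e1 (iff_trans e2 (iff_trans e3 (iff_trans e4 (iff_trans e5 e6)))).
have [N01 N10 a0 hlt] := L2 key.
set a := N 0 0 in a0 hlt *; set d := N 1 1 in hlt *.
have ap : 0 < Normc.normc a by apply: nc_gt0.
exists (d / a); split.
  by rewrite nc_mul Normc.normcV ltr_pdivrMr // mul1r.
exists a; split => //.
rewrite (xy_mkU u u' v v') -/P' -/Q' MN.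
have NE : N = a *: Dg (d / a).
  apply/matrixP => i j; rewrite [RHS]mxE.
  case: (ord2P i) => ->; case: (ord2P j) => ->.
  - by rewrite Dg00 mulr1.
  - by rewrite Dg01 mulr0.
  - by rewrite Dg10 mulr0.
  - by rewrite Dg11 mulrCA divff // mulr1.
by rewrite NE -scalemxAr -scalemxAl.
Qed.
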